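(* Let $q$ be a prime power, $N=\operatorname{SL}(2,q)$ and $G=\operatorname{GL}(2,q)$. Then $\operatorname{Ind}_N^G:\operatorname{R}(N)\to\operatorname{R}(G)$ is a monomorphism if and only if $q$ is a power of $2$, and $\operatorname{Ind}_N^G:\operatorname{RO}(N)\to\operatorname{RO}(G)$ is a monomorphism if and only if $q$ is a power of $2$ or $q\equiv 3 \pmod 4$.
   Context: $\operatorname{SL}(2,q)$ and $\operatorname{GL}(2,q)$ are the special and general linear groups of $2\times 2$ matrices over the field $\mathbb{F}_q$. $\operatorname{R}(K)$, $\operatorname{RO}(K)$ are the complex and real representation groups of $K$ (Grothendieck groups of $\mathbb{C}K$-, resp. $\mathbb{R}K$-modules). *)

(* Defs.v *)
From HB Require Import structures.
From mathcomp Require Import all_boot all_order all_algebra all_fingroup all_solvable all_field all_character.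
Set Implicit Arguments. Unset Strict Implicit. Unset Printing Implicit Defensive.
Import Order.TTheory GRing.Theory Num.Theory.
Local Open Scope ring_scope.
Local Open Scope group_scope.

Definition SL2set (F : finFieldType) : {set {'GL_2[F]}} :=
  [set g : {'GL_2[F]} | \det (GLval g) == 1%R].

Lemma SL2_group_set (F : finFieldType) : group_set (SL2set F).
Proof.
apply/group_setP; split; first by rewrite inE GL_1E det1.
move=> x y; rewrite !inE => /eqP dx /eqP dy.
by rewrite GL_ME det_mulmx dx dy mulr1.
Qed.

Canonical SL2 (F : finFieldType) : {group {'GL_2[F]}} := Group (SL2_group_set F).

(* R(K): the Grothendieck group of CK-modules, identified (via characters)
   with the virtual characters 'Z[irr K]. *)
Definition Rgroup (gT : finGroupType) (K : {group gT}) (phi : 'CF(K)) : Prop :=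
  phi \in 'Z[irr K].

Definition real_repr_char (gT : finGroupType) (K : {group gT}) (phi : 'CF(K)) : Prop :=
  exists (n : nat) (rG : mx_representation algC K n),
    (forall g, g \in K -> forall i j, (rG g i j) \is Num.real) /\ phi = cfRepr rG.

(* RO(K): the Grothendieck group of RK-modules, i.e. formal differences
   [V] - [W] of real representations, identified via characters with a
   subgroup of 'CF(K). *)
Definition ROgroup (gT : finGroupType) (K : {group gT}) (phi : 'CF(K)) : Prop :=
  exists chi1 chi2 : 'CF(K),
    [/\ real_repr_char chi1, real_repr_char chi2 & phi = chi1 - chi2].

Definition is_pow2 (q : nat) : Prop := exists k : nat, q = (2 ^ k)%N.

(* Main.v *)
Require Import Defs.
From HB Require Import structures.
From mathcomp Require Import all_boot all_order all_algebra all_fingroup all_solvable all_field all_character.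
From mathcomp Require Import zify.
Set Implicit Arguments. Unset Strict Implicit. Unset Printing Implicit Defensive.
Import Order.TTheory GRing.Theory Num.Theory.
Local Open Scope ring_scope.
From mathcomp Require Import ring.
From mathcomp Require Import ring.
Definition mx2 (F : fieldType) (a b c d : F) : 'M[F]_2 :=
  \matrix_(i, j) if (i : nat) == 0%N then (if (j : nat) == 0%N then a else b)
                  else (if (j : nat) == 0%N then c else d).

Lemma mx2_eta (F : fieldType) (M : 'M[F]_2) : M = mx2 (M 0 0) (M 0 1) (M 1 0) (M 1 1).
Proof.
apply/matrixP => i j; rewrite !mxE.
by case: i => [[|[|i]]] Hi; case: j => [[|[|j]]] Hj //=; congr (M _ _); apply/val_inj.
Qed.

Lemma mx2_mul (F : fieldType) (a b c d a' b' c' d' : F) :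
  mx2 a b c d *m mx2 a' b' c' d' =
  mx2 (a * a' + b * c') (a * b' + b * d') (c * a' + d * c') (c * b' + d * d').
Proof.
apply/matrixP => i j; rewrite !mxE !big_ord_recl big_ord0 !mxE /= addr0.
by case: i => [[|[|i]]] Hi; case: j => [[|[|j]]] Hj.
Qed.

Lemma mx2_inj (F : fieldType) (a b c d a' b' c' d' : F) :
  mx2 a b c d = mx2 a' b' c' d' -> [/\ a = a', b = b', c = c' & d = d'].
Proof.
move=> E; have e := fun i j => congr1 (fun M : 'M[F]_2 => M i j) E.
move: (e 0 0) (e 0 1) (e 1 0) (e 1 1); rewrite !mxE /=; done.
Qed.

Lemma det_mx2 (F : fieldType) (a b c d : F) : \det (mx2 a b c d) = a * d - b * c.
Proof.
rewrite (expand_det_row _ 0) !big_ord_recl big_ord0 addr0 /cofactor !det_mx11 !mxE /=.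

by rewrite /= expr0 expr1 !mul1r mulN1r mulrN.
Qed.

Lemma scalar_mx2 (F : fieldType) (s : F) : s%:M = mx2 s 0 0 s.
Proof.
by apply/matrixP => i j; rewrite !mxE; case: i => [[|[|i]]] Hi; case: j => [[|[|j]]] Hj.
Qed.
Lemma card_gt1 (F : finFieldType) : (1 < #|F|)%N.
Proof. exact: finNzRing_gt1. Qed.

Lemma unit_pow (F : finFieldType) (a : F) : a != 0 -> a ^+ (#|F|.-1) = 1.
Proof.
move=> a0; have := expf_card a; rewrite -(prednK (ltnW (card_gt1 F))) exprS.
by move/(canRL (mulKf a0)); rewrite mulVf.
Qed.

Lemma pow2_sq (F : finFieldType) : is_pow2 #|F| -> forall d : F, exists s, d = s ^+ 2.
Proof.
case=> k qk d; have k0 : (0 < k)%N.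
  by case: k qk => // q1; have := card_gt1 F; rewrite q1.
exists (d ^+ (2 ^ k.-1)); rewrite -exprM -expnSr prednK // -qk.
by rewrite expf_card.
Qed.

Lemma char2_card (F : finFieldType) (H : 2 \in [pchar F]) : is_pow2 #|F|.
Proof.
exists (logn 2 #|pPrimeCharType H|); exact: card_pprimeChar.
Qed.

Lemma even_pow2 (F : finFieldType) : ~~ odd #|F| -> is_pow2 #|F|.
Proof.
move=> ev; have [p pr pc] := finPcharP F.
have cq := card_pprimeChar pc.
have [p2|op] := even_prime pr; first by clear cq; move: pc; rewrite p2 => pc; exact: char2_card.
move: ev; rewrite [#|F|]cq oddX op orbT //.
Qed.

Lemma odd_neq (F : finFieldType) : odd #|F| -> (1 != - 1 :> F).
Proof.
move=> oq; apply/negP => /eqP E.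
have c2 : (2%N \in [pchar F]).
  by rewrite inE /= [2%:R]mulr2n {2}E subrr.
have [k qk] := char2_card c2; move: oq; rewrite qk oddX /=.
case: k qk => // q1; have := card_gt1 F; rewrite q1 //.
Qed.

Lemma odd_exists (F : finFieldType) : odd #|F| ->
  exists a : F, a ^+ (#|F|.-1)./2 = -1.
Proof.
move=> oq; set m := (#|F|.-1)./2.
have qm : #|F|.-1 = (m * 2)%N.
  rewrite /m -{1}(odd_double_half #|F|.-1) -subn1 oddB ?oq /=; last exact: ltnW (card_gt1 F).
  by rewrite add0n -muln2.
have m0 : (0 < m)%N.
  rewrite lt0n; apply/negP => /eqP m0; move: qm; rewrite m0 /= => q1.
  have := card_gt1 F; have := oq; case: #|F| q1 => [|[|[|]]] //.
case: (boolP [exists a : F, (a != 0) && (a ^+ m != 1)]).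
  case/existsP => a /andP[a0 am]; exists a.
  have : (a ^+ m) ^+ 2 == 1 by rewrite -exprM -qm unit_pow.
  by rewrite sqrf_eq1 (negbTE am) /= => /eqP.
move/existsPn => H; exfalso.
have allr : all (root ('X^m - 1)) (enum [pred x : F | x != 0]).
  apply/allP => x; rewrite mem_enum inE => x0; rewrite rootE !hornerE.
  by move: (H x); rewrite x0 /= negbK subr_eq0.
have := max_poly_roots _ allr (enum_uniq _).
rewrite size_Xn_sub_1 // -cardE cardC1 ?monic_neq0 ?monicXnsubC //.
by move=> /(_ isT); rewrite qm ltnS; lia.
Qed.

Lemma q3_sq (F : finFieldType) : (#|F| %% 4 = 3)%N ->
  forall d : F, d != 0 -> exists s, d = s ^+ 2 \/ d = - s ^+ 2.
Proof.
move=> q3 d d0; set k := (#|F| %/ 4)%N.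
have qk : #|F|.-1 = ((2 * k + 1) * 2)%N.
  by rewrite (divn_eq #|F| 4) q3 /k; lia.
have : (d ^+ (2 * k + 1)) ^+ 2 == 1 by rewrite -exprM -qk unit_pow.
have ds : d * d ^+ (2 * k + 1) = (d ^+ k.+1) ^+ 2.
  by rewrite -exprS -exprM; congr (_ ^+ _); lia.
rewrite sqrf_eq1 => /orP[/eqP z|/eqP z]; exists (d ^+ k.+1).
  by left; rewrite -ds z mulr1.
by right; rewrite -ds z mulrN1 opprK.
Qed.

Lemma q1_i (F : finFieldType) : odd #|F| -> (#|F| %% 4 <> 3)%N ->
  exists i : F, i ^+ 2 = -1.
Proof.
move=> oq q3; have [a am] := odd_exists oq.
have o2 : (#|F| %% 2 = 1)%N by rewrite modn2 oq.
have e : ((#|F|.-1)./2 = 2 * (#|F| %/ 4))%N by rewrite -divn2; lia.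
exists (a ^+ (#|F| %/ 4)); by rewrite -exprM mulnC -e.
Qed.

Lemma nonsq (F : finFieldType) (a : F) : odd #|F| -> a ^+ (#|F|.-1)./2 = -1 ->
  forall s : F, a <> s ^+ 2.
Proof.
move=> oq am s as2; have n1 := odd_neq oq.
have s0 : s != 0.
  apply/negP => /eqP s0; move: am; rewrite as2 s0 !expr0n /=.
  case: eqP => _ /= E.
    by move: n1; rewrite -E eqxx.
  by move/eqP: E; rewrite eq_sym oppr_eq0 oner_eq0.
move: am; rewrite as2 -exprM mulnC -divn2.
have o2 : (#|F| %% 2 = 1)%N by rewrite modn2 oq.
rewrite (_ : (_ %/ 2 * 2)%N = #|F|.-1); last by lia.
by rewrite unit_pow // => E; move: n1; rewrite {1}E eqxx.
Qed.
Lemma unit_of_det (F : finFieldType) (A : 'M[F]_2) : \det A != 0 -> A \is a GRing.unit.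
Proof. by move=> d0; rewrite -[_ \is a _]/(A \in unitmx) unitmxE unitfE. Qed.

Definition mkGL (F : finFieldType) (A : 'M[F]_2) (H : \det A != 0) : {'GL_2[F]} :=
  Sub A (unit_of_det H).

Lemma mkGLE (F : finFieldType) (A : 'M[F]_2) (H : \det A != 0) : GLval (mkGL H) = A.
Proof. by []. Qed.

Lemma conj_GL (F : finFieldType) (u v w : {'GL_2[F]}) :
  GLval u *m GLval v = GLval v *m GLval w -> (u ^ v)%g = w.
Proof.
move=> E; have : (u * v = v * w)%g by apply/val_inj.
by move=> E'; rewrite conjgE ?mulgA -?mulgA E' mulKg.
Qed.

Lemma inSL (F : finFieldType) (u : {'GL_2[F]}) : (u \in SL2 F) = (\det (GLval u) == 1).
Proof. by rewrite inE. Qed.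

Lemma SL2_normal (F : finFieldType) : (SL2 F <| 'GL_2[F])%g.
Proof.
apply/andP; split; first exact: subsetT.
apply/subsetP => y _; rewrite inE; apply/subsetP => x.
rewrite mem_conjg !inE conjgE invgK !GL_MxE GL_VxE !det_mulmx det_inv.
by rewrite mulrC divfK ?GL_det.
Qed.

Lemma det_GLM (F : finFieldType) (u v : {'GL_2[F]}) :
  \det (GLval (u * v)%g) = \det (GLval u) * \det (GLval v).
Proof. by rewrite GL_MxE det_mulmx. Qed.

Lemma det_GLV (F : finFieldType) (u : {'GL_2[F]}) :
  \det (GLval (u^-1)%g) = (\det (GLval u))^-1.
Proof. by rewrite GL_VxE det_inv. Qed.

Lemma conj_GL_inv (F : finFieldType) (u v w : {'GL_2[F]}) :
  (u ^ v)%g = w -> GLval u *m GLval v = GLval v *m GLval w.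
Proof.
move=> E; rewrite -!GL_MxE; congr GLval.
by rewrite -E conjgE !mulgA mulgV mul1g.
Qed.

Lemma scal_GL (F : finFieldType) (s : F) : s != 0 ->
  exists z : {'GL_2[F]}, GLval z = s%:M /\ forall x, (x ^ z)%g = x.
Proof.
move=> s0; have d : \det (s%:M : 'M[F]_2) != 0 by rewrite det_scalar expf_neq0.
exists (mkGL d); split => // x; apply: conj_GL.
by rewrite mkGLE scalar_mxC.
Qed.

Lemma decomp_sq (F : finFieldType) (y : {'GL_2[F]}) (s : F) :
  \det (GLval y) = s ^+ 2 ->
  exists z n : {'GL_2[F]}, [/\ n \in SL2 F, y = (z * n)%g & forall x, (x ^ z)%g = x].
Proof.
move=> dy; have s0 : s != 0.
  by apply/negP => /eqP s0; move: (GL_det y); rewrite dy s0 expr0n eqxx.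
have [z [zv zc]] := scal_GL s0; exists z, (z^-1 * y)%g; split => //.
  rewrite inSL det_GLM det_GLV zv det_scalar dy mulVf //.
  by rewrite expf_neq0.
by rewrite mulKVg.
Qed.

Lemma GL_inv_mx2 (F : finFieldType) (x : {'GL_2[F]}) a b c d :
  GLval x = mx2 a b c d -> a * d - b * c = 1 ->
  exists w : {'GL_2[F]}, GLval w = mx2 d (-b) (-c) a /\ w = (x^-1)%g.
Proof.
move=> xv dx; have dw : \det (mx2 d (-b) (-c) a) != 0.
  have -> : \det (mx2 d (-b) (-c) a) = a * d - b * c by rewrite det_mx2; ring.
  by rewrite dx oner_neq0.
exists (mkGL dw); split => //; apply/eqP; rewrite eq_sym eq_invg_mul; apply/eqP/val_inj.
change (GLval (x * mkGL dw)%g = GLval 1%g); rewrite GL_MxE xv mkGLE mx2_mul GL_1E.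
transitivity (mx2 (1 : F) 0 0 1); last by rewrite -scalar_mx2.
congr mx2; rewrite -?dx; ring.
Qed.

Lemma inv_conj (F : finFieldType) (x : {'GL_2[F]}) : x \in SL2 F ->
  exists h : {'GL_2[F]}, \det (GLval h) = -1 /\ (x ^ h)%g = (x^-1)%g.
Proof.
rewrite inSL => /eqP dx.
set a := GLval x 0 0; set b := GLval x 0 1; set c := GLval x 1 0; set d := GLval x 1 1.
have xv : GLval x = mx2 a b c d by exact: mx2_eta.
have dx' : a * d - b * c = 1 by rewrite -det_mx2 -xv.
have [w [wv <-]] := GL_inv_mx2 xv dx'.
suff [h [hd hc]] : exists h : 'M[F]_2, \det h = -1 /\ mx2 a b c d *m h = h *m mx2 d (-b) (-c) a.
  have h0 : \det h != 0 by rewrite hd oppr_eq0 oner_eq0.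
  exists (mkGL h0); split; first by rewrite mkGLE.
  by apply: conj_GL; rewrite mkGLE xv wv.
have [b0|b0] := eqVneq b 0; last first.
  exists (mx2 1 0 ((d - a) / b) (-1)); rewrite det_mx2 !mx2_mul; split; first by ring.
  by congr mx2; field.
have [c0|c0] := eqVneq c 0; last first.
  exists (mx2 1 ((d - a) / c) 0 (-1)); rewrite det_mx2 !mx2_mul; split; first by ring.
  by rewrite b0; congr mx2; field.
exists (mx2 0 1 1 0); rewrite det_mx2 !mx2_mul b0 c0; split; first by ring.
by congr mx2; ring.
Qed.

Lemma detU (F : finFieldType) (b : F) : \det (mx2 1 b 0 1) != 0.
Proof. by rewrite det_mx2 mulr0 subr0 mulr1 oner_neq0. Qed.

Definition mkU (F : finFieldType) (b : F) : {'GL_2[F]} := mkGL (detU b).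

Lemma mkU_SL (F : finFieldType) (b : F) : mkU b \in SL2 F.
Proof. by rewrite inSL mkGLE det_mx2 mulr0 subr0 mulr1. Qed.

Lemma classU (F : finFieldType) (b b' : F) : b' != 0 ->
  mkU b \in (mkU b' ^: SL2 F)%g -> exists t, b = b' * t ^+ 2.
Proof.
move=> b0 /imsetP[n nN /esym /conj_GL_inv]; rewrite !mkGLE.
move: nN; rewrite inSL (mx2_eta (GLval n)).
set p := GLval n 0 0; set r := GLval n 0 1; set s := GLval n 1 0; set t := GLval n 1 1.
rewrite det_mx2 !mx2_mul => /eqP dn /mx2_inj[e1 e2 _ _].
have s0 : s = 0.
  have : b' * s = 0.
    have -> : b' * s = (1 * p + b' * s) - p by ring.
    rewrite e1; ring.
  by move/eqP; rewrite mulf_eq0 (negbTE b0) /= => /eqP.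
move: dn e2; rewrite s0 => dn e2; exists t.
have -> : b = b * (p * t - r * 0) by rewrite dn mulr1.
have : b' * t = p * b.
  have -> : b' * t = (1 * r + b' * t) - r by ring.
  rewrite e2; ring.
move=> e; rewrite expr2 mulrA e; ring.
Qed.

Lemma invU (F : finFieldType) (b : F) : ((mkU b)^-1)%g = mkU (- b).
Proof.
apply/eqP; rewrite eq_invg_mul; apply/eqP/val_inj.
change (GLval (mkU b * mkU (- b))%g = GLval 1%g); rewrite GL_MxE !mkGLE mx2_mul GL_1E.
transitivity (mx2 (1 : F) 0 0 1); last by rewrite -scalar_mx2.
congr mx2; ring.
Qed.

Lemma conjU (F : finFieldType) (a : F) (a0 : a != 0) :
  exists g : {'GL_2[F]}, (mkU 1%R ^ g)%g = mkU a.
Proof.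
have dg : \det (mx2 1 0 0 a) != 0 by rewrite det_mx2 mul1r mulr0 subr0.
exists (mkGL dg); apply: conj_GL; rewrite /mkU !mkGLE !mx2_mul; congr mx2; ring.
Qed.

Lemma irr_diff (gT : finGroupType) (N : {group gT}) (x y : gT) :
  x \in N -> y \in N -> x \notin (y ^: N)%g -> exists i, 'chi[N]_i y != 'chi_i x.
Proof.
move=> Nx Ny nxy; case: (boolP [exists i, 'chi[N]_i y != 'chi_i x]).
  by case/existsP => i ?; exists i.
move/existsPn => H; exfalso.
have := second_orthogonality_relation x Ny; rewrite (negbTE nxy) mulr0n.
under eq_bigr => i _ do rewrite (eqP (negbNE (H i))).
rewrite second_orthogonality_relation // class_refl mulr1n => /eqP.
by rewrite (negbTE (neq0CG _)).
Qed.

Lemma irr_rdiff (gT : finGroupType) (N : {group gT}) (x y : gT) :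
  x \in N -> y \in N -> x \notin (y ^: N)%g -> x \notin ((y^-1) ^: N)%g ->
  exists i, 'chi[N]_i y + ('chi_i y)^* != 'chi_i x + ('chi_i x)^*.
Proof.
move=> Nx Ny nxy nxy'.
case: (boolP [exists i, 'chi[N]_i y + ('chi_i y)^* != 'chi_i x + ('chi_i x)^*]).
  by case/existsP => i ?; exists i.
move/existsPn => H; exfalso.
have key : forall z, z \in N ->
    \sum_i 'chi[N]_i x * ('chi_i z + ('chi_i z)^*)^* =
    #|('C_N[x])%g|%:R *+ (x \in (z ^: N)%g) + #|('C_N[x])%g|%:R *+ (x \in (z^-1 ^: N)%g).
  move=> z Nz; rewrite -!second_orthogonality_relation ?groupV // -big_split /=.
  by apply: eq_bigr => i _; rewrite rmorphD /= mulrDr irr_inv.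
have := key y Ny; rewrite (negbTE nxy) (negbTE nxy') !mulr0n addr0.
under eq_bigr => i _ do rewrite (eqP (negbNE (H i))).
rewrite key // class_refl mulr1n => /eqP.
by rewrite -[X in X + _]mulr1n -mulrnDr mulrn_eq0 add1n /= (negbTE (neq0CG _)).
Qed.

Definition mRe m n (A : 'M[algC]_(m, n)) := map_mx (fun z : algC => 'Re z) A.
Definition mIm m n (A : 'M[algC]_(m, n)) := map_mx (fun z : algC => 'Im z) A.

Lemma mReM m n p (A : 'M[algC]_(m, n)) (B : 'M[algC]_(n, p)) :
  mRe (A *m B) = mRe A *m mRe B - mIm A *m mIm B.
Proof.
apply/matrixP => i j; rewrite !mxE raddf_sum /= -sumrB.
by apply: eq_bigr => k _; rewrite !mxE ReM.
Qed.

Lemma mImM m n p (A : 'M[algC]_(m, n)) (B : 'M[algC]_(n, p)) :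
  mIm (A *m B) = mRe A *m mIm B + mIm A *m mRe B.
Proof.
apply/matrixP => i j; rewrite !mxE raddf_sum /= -big_split.
apply: eq_bigr => k _; rewrite !mxE ImM; congr (_ + _); exact: mulrC.
Qed.

Definition realify n (A : 'M[algC]_n) : 'M[algC]_(n + n) :=
  block_mx (mRe A) (- mIm A) (mIm A) (mRe A).

Lemma realifyM n (A B : 'M[algC]_n) : realify (A *m B) = realify A *m realify B.
Proof.
rewrite /realify mulmx_block mReM mImM.
rewrite !mulmxN !mulNmx.
by rewrite opprD [mIm A *m mRe B + _]addrC [- _ + mRe A *m mRe B]addrC.
Qed.

Lemma realify1 n : realify (1%:M : 'M[algC]_n) = 1%:M.
Proof.
have e1 : mRe (1%:M : 'M[algC]_n) = 1%:M.
  by apply/matrixP => i j; rewrite !mxE; apply/Creal_ReP; exact: rpred_nat.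
have e0 : mIm (1%:M : 'M[algC]_n) = 0.
  by apply/matrixP => i j; rewrite !mxE; apply/Creal_ImP; exact: rpred_nat.
by rewrite /realify e1 e0 oppr0 scalar_mx_block.
Qed.

Lemma realify_real n (A : 'M[algC]_n) i j : realify A i j \is Num.real.
Proof.
rewrite /realify /block_mx /col_mx /row_mx mxE.
case: (split i) => k; rewrite mxE; case: (split j) => l; rewrite !mxE ?rpredN //.
Qed.

Lemma trace_realify n (A : 'M[algC]_n) : \tr (realify A) = \tr A + (\tr A)^*.
Proof.
rewrite /realify mxtrace_block.
have -> : \tr (mRe A) = 'Re (\tr A).
  by rewrite /mxtrace raddf_sum; apply: eq_bigr => i _; rewrite mxE.
by rewrite ReE -mulr2n -[_ *+ 2]mulr_natr divfK // pnatr_eq0.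
Qed.

Lemma realify_repr (gT : finGroupType) (K : {group gT}) n (rG : mx_representation algC K n) :
  mx_repr K (fun g => realify (rG g)).
Proof.
split; first by rewrite repr_mx1 realify1.
by move=> x y Kx Ky /=; rewrite repr_mxM // realifyM.
Qed.

Lemma RO_repr (gT : finGroupType) (K : {group gT}) n (rG : mx_representation algC K n) :
  real_repr_char (cfRepr rG + ((cfRepr rG)^*)%CF).
Proof.
exists (n + n)%N, (MxRepresentation (realify_repr rG)); split.
  by move=> g _ i j; exact: realify_real.
apply/cfunP => g; rewrite !cfunE /= trace_realify.
by case: (g \in K); rewrite ?mulr1n ?mulr0n ?rmorph0 ?addr0.
Qed.

Lemma Ind_inj_inv (F : finFieldType) (th : 'CF(SL2 F)) :
  (forall x y, x \in SL2 F -> th (x ^ y)%g = th x) ->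
  'Ind['GL_2[F]] th = 0 -> th = 0.
Proof.
move=> inv H; apply/cfunP => x; rewrite cfunE.
case: (boolP (x \in SL2 F)) => Nx; last by rewrite cfun0.
have := congr1 (fun f : 'CF(_) => f x) H; rewrite cfIndE ?subsetT // cfunE.
under eq_bigr => y _ do rewrite inv //.
rewrite sumr_const => /eqP; rewrite mulf_eq0 invr_eq0 (negbTE (neq0CG _)) /=.
rewrite mulrn_eq0 => /orP[|/eqP //].
by rewrite (cardD1 1%g) group1.
Qed.

Lemma inj_of_inv (F : finFieldType) (P : 'CF(SL2 F) -> Prop) :
  (forall phi psi, P phi -> P psi ->
     forall x y, x \in SL2 F -> (phi - psi) (x ^ y)%g = (phi - psi) x) ->
  forall phi psi, P phi -> P psi ->
  'Ind['GL_2[F]] phi = 'Ind['GL_2[F]] psi -> phi = psi.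
Proof.
move=> inv phi psi Pphi Ppsi E; apply/eqP; rewrite -subr_eq0; apply/eqP.
by apply: Ind_inj_inv; [exact: inv | rewrite linearB /= E subrr].
Qed.

Lemma inv_sq (F : finFieldType) (th : 'CF(SL2 F)) x y s :
  \det (GLval y) = s ^+ 2 -> th (x ^ y)%g = th x.
Proof.
move=> ds; have [z [n [Nn -> zc]]] := decomp_sq ds.
by rewrite conjgM zc cfunJ.
Qed.

Lemma rrc_inv (gT : finGroupType) (K : {group gT}) (chi : 'CF(K)) :
  real_repr_char chi -> forall x, chi (x^-1)%g = chi x.
Proof.
case=> n [rG [rr ->]] x; rewrite char_inv ?cfRepr_char //.
apply: conj_Creal; rewrite cfunE; case Kx: (x \in K); last by rewrite mulr0n.
by rewrite mulr1n /mxtrace; apply: rpred_sum => i _; exact: rr.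
Qed.

Lemma RO_inv (gT : finGroupType) (K : {group gT}) (th : 'CF(K)) :
  ROgroup th -> forall x, th (x^-1)%g = th x.
Proof.
by case=> c1 [c2 [r1 r2 ->]] x; rewrite !cfunE !rrc_inv.
Qed.

Lemma inv_q3 (F : finFieldType) (th : 'CF(SL2 F)) x y :
  (#|F| %% 4 = 3)%N -> (forall z, th (z^-1)%g = th z) -> x \in SL2 F ->
  th (x ^ y)%g = th x.
Proof.
move=> q3 thi Nx.
have [s [ds|ds]] := q3_sq q3 (GL_det y); first exact: inv_sq ds.
have s0 : s != 0.
  by apply/negP => /eqP s0; move: (GL_det y); rewrite ds s0 expr0n oppr0 eqxx.
have [z [zv zc]] := scal_GL s0.
have [h [hd hc]] := inv_conj Nx.
have Nn : ((z * h)^-1 * y)%g \in SL2 F.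
  rewrite inSL det_GLM det_GLV det_GLM zv det_scalar hd ds.
  by apply/eqP; field; rewrite oppr_eq0 oner_eq0 s0.
have ey : y = (z * h * ((z * h)^-1 * y))%g by rewrite mulKVg.
by rewrite {1}ey conjgM (conjgM x z h) zc hc cfunJ // thi.
Qed.

Theorem part1_if (F : finFieldType) : is_pow2 #|F| ->
  forall phi psi : 'CF(SL2 F),
  'Ind['GL_2[F]] phi = 'Ind['GL_2[F]] psi -> phi = psi.
Proof.
move=> p2 phi psi; apply: (@inj_of_inv F (fun _ => True)) => // {}phi {}psi _ _ x y Nx.
have [s ds] := pow2_sq p2 (\det (GLval y)); exact: inv_sq ds.
Qed.

Theorem part2_if3 (F : finFieldType) : (#|F| %% 4 = 3)%N ->
  forall phi psi : 'CF(SL2 F), ROgroup phi -> ROgroup psi ->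
  'Ind['GL_2[F]] phi = 'Ind['GL_2[F]] psi -> phi = psi.
Proof.
move=> q3; apply: inj_of_inv => phi psi Pphi Ppsi x y Nx.
apply: inv_q3 => // z; rewrite !cfunE !RO_inv //.
Qed.

Lemma GL_norm (F : finFieldType) (y : {'GL_2[F]}) : y \in 'N(SL2 F)%g.
Proof. by apply: (subsetP (normal_norm (SL2_normal F))); rewrite inE. Qed.

Lemma Ind_conjg (F : finFieldType) (phi : 'CF(SL2 F)) (y : {'GL_2[F]}) :
  'Ind['GL_2[F]] (phi ^ y)%CF = 'Ind['GL_2[F]] phi.
Proof.
have Gy : y \in 'GL_2[F]%g by rewrite inE.
rewrite -(@cfConjgInd _ _ _ _ phi y (normal_refl _) (SL2_normal F) Gy) cfConjg_id //.
Qed.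

Lemma odd_setup (F : finFieldType) : odd #|F| ->
  exists a : F, [/\ a != 0, forall t : F, a <> t ^+ 2 &
     ((mkU (1 : F)) \notin (mkU a ^: SL2 F)%g)].
Proof.
move=> oq; have [a am] := odd_exists oq.
have ns := nonsq oq am.
have a0 : a != 0.
  by apply/negP => /eqP a0; apply: (ns 0); rewrite a0 expr0n.
exists a; split => //; apply/negP => /(classU a0) [t e].
have t0 : t != 0 by apply/negP => /eqP t0; move: e; rewrite t0 expr0n mulr0 => /eqP; rewrite oner_eq0.
apply: (ns t^-1); rewrite exprVn; apply: (mulIf (expf_neq0 2 t0)).
by rewrite mulVf ?expf_neq0 // -e.
Qed.

Theorem part1_onlyif (F : finFieldType) :
  (forall phi psi : 'CF(SL2 F), Rgroup phi -> Rgroup psi ->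
    'Ind['GL_2[F]] phi = 'Ind['GL_2[F]] psi -> phi = psi) -> is_pow2 #|F|.
Proof.
move=> H; case: (boolP (odd #|F|)) => [oq|]; last exact: even_pow2.
exfalso; have [a [a0 ns nc]] := odd_setup oq.
have [g xg] := conjU a0.
have [i ne] := irr_diff (mkU_SL _) (mkU_SL a) nc.
have E : 'chi_i = ('chi_i ^ g^-1)%CF.
  by rewrite -conjg_IirrE; apply: H; rewrite /Rgroup ?irr_vchar // conjg_IirrE Ind_conjg.
by move: ne; rewrite {2}E cfConjgE ?GL_norm // invgK xg eqxx.
Qed.

Lemma rrc0 (gT : finGroupType) (K : {group gT}) : real_repr_char (0 : 'CF(K)).
Proof.
have r0 : mx_repr K (fun _ : gT => (1%:M : 'M[algC]_0)) by split => // x y _ _; rewrite mul1mx.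
exists 0%N, (MxRepresentation r0); split.
  by move=> g _ [].
by apply/cfunP => g; rewrite !cfunE /mxtrace big_ord0 mul0rn.
Qed.

Lemma RO_irr (gT : finGroupType) (K : {group gT}) (i : Iirr K) :
  ROgroup ('chi_i + ('chi_i)^*%CF).
Proof.
exists ('chi_i + ('chi_i)^*%CF), 0; split; rewrite ?subr0 //; last exact: rrc0.
by have := RO_repr 'Chi_i; rewrite irrRepr.
Qed.

Lemma conjg_re (F : finFieldType) (i : Iirr (SL2 F)) (y : {'GL_2[F]}) :
  (('chi_i + ('chi_i)^*%CF) ^ y)%CF =
  ('chi_(conjg_Iirr i y) + ('chi_(conjg_Iirr i y))^*%CF).
Proof.
apply/cfunP => x; rewrite conjg_IirrE !cfunE !cfConjgE ?GL_norm //.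
by rewrite cfunE cfConjCE.
Qed.

Theorem part2_onlyif (F : finFieldType) :
  (forall phi psi : 'CF(SL2 F), ROgroup phi -> ROgroup psi ->
    'Ind['GL_2[F]] phi = 'Ind['GL_2[F]] psi -> phi = psi) ->
  is_pow2 #|F| \/ (#|F| %% 4 = 3)%N.
Proof.
move=> H; case: (boolP (odd #|F|)) => [oq|ev]; last by left; exact: even_pow2.
case: (eqVneq (#|F| %% 4)%N 3%N) => [q3|q3]; first by right.
exfalso; have [ii e] := q1_i oq (elimN eqP q3).
have [a [a0 ns nc]] := odd_setup oq.
have nc' : mkU (1 : F) \notin (((mkU a)^-1) ^: SL2 F)%g.
  rewrite invU; apply/negP => /(classU (b' := - a)); rewrite oppr_eq0 => /(_ a0) [t e'].
  have t0 : t != 0 by apply/negP => /eqP t0; move: e'; rewrite t0 expr0n mulr0 => /eqP; rewrite oner_eq0.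
  apply: (ns (ii / t)); rewrite exprMn e exprVn; apply: (mulIf (expf_neq0 2 t0)).
  by rewrite divfK ?expf_neq0 // e' mulNr opprK.
have [g xg] := conjU a0.
have [i ne] := irr_rdiff (mkU_SL (1 : F)) (mkU_SL a) nc nc'.
set phi := ('chi_i + ('chi_i)^*%CF).
have E : phi = (phi ^ g^-1)%CF.
  apply: H; [exact: RO_irr | rewrite conjg_re; exact: RO_irr | exact/esym/Ind_conjg].
have ne' : phi (mkU a) != phi (mkU (1 : F)) by rewrite /phi !cfunE.
by move: ne'; rewrite {2}E cfConjgE ?GL_norm // invgK xg eqxx.
Qed.

Close Scope ring_scope.
Unset Implicit Arguments.

Theorem mainTheorem6 (F : finFieldType) :
  ((forall phi psi : 'CF(SL2 F),
      Rgroup phi -> Rgroup psi ->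
      ('Ind['GL_2[F]] phi = 'Ind['GL_2[F]] psi)%R -> phi = psi)
   <-> is_pow2 #|F|)
  /\
  ((forall phi psi : 'CF(SL2 F),
      ROgroup phi -> ROgroup psi ->
      ('Ind['GL_2[F]] phi = 'Ind['GL_2[F]] psi)%R -> phi = psi)
   <-> (is_pow2 #|F| \/ (#|F| %% 4 = 3)%N)).
Proof.
split; split.
- exact: part1_onlyif.
- by move=> p2 phi psi _ _; exact: part1_if.
- exact: part2_onlyif.
- by case=> [p2|q3] phi psi Pphi Ppsi; [exact: part1_if | exact: part2_if3].
Qed.
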